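(* Let $w_1,w_2,v_1,v_2\in\Sigma^*$ such that $\mathsf{Facs}(w_1)\cap\mathsf{Facs}(w_2)=\mathsf{Facs}(v_1)\cap\mathsf{Facs}(v_2)$, and let $r=\max\{|u| : u\in\mathsf{Facs}(w_1)\cap\mathsf{Facs}(w_2)\}$. If $w_1\equiv_{k+r+2} v_1$ and $w_2\equiv_{k+r+2} v_2$ for some $k\in\mathbb{N}$ with $k\ge 1$, then $w_1\cdot w_2\equiv_k v_1\cdot v_2$.
   Context: $\Sigma$ is a fixed finite alphabet. For $w \in \Sigma^*$, $\mathsf{Facs}(w)$ is the set of all factors (contiguous subwords, including $\varepsilon$ and $w$) of $w$. The structure $\mathfrak{A}_w$ representing $w$ has universe $\mathsf{Facs}(w)\cup\{\perp\}$, a ternary relation $R_\circ=\{(x,y,z)\in\mathsf{Facs}(w)^3 : x=y\cdot z\}$, for each letter $\mathtt{a}\in\Sigma$ a constant interpreted as $\mathtt{a}$ if $\mathtt{a}$ occurs in $w$ and as $\perp$ otherwise, and a constant $\varepsilon$ interpreted as the empty word. The $k$-round Ehrenfeucht–Fraïssé game on $\mathfrak{A}_w,\mathfrak{A}_v$: in each round $i$, Spoiler picks one of the two structures and an element of its universe, Duplicator answers with an element of the other structure's universe; let $a_i$ (in $\mathfrak{A}_w$) and $b_i$ (in $\mathfrak{A}_v$) be the chosen elements. Duplicator wins if the tuples $(a_1,\dots,a_k,\vec c^{\,\mathfrak{A}_w})$ and $(b_1,\dots,b_k,\vec c^{\,\mathfrak{A}_v})$, where $\vec c$ lists the interpretations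 of all constants, form a partial isomorphism: for all indices $i,j,l$, $a_i$ equals the interpretation of a constant $c$ iff $b_i$ equals the interpretation of $c$; $a_i=a_j$ iff $b_i=b_j$; and $a_i=a_j\cdot a_l$ iff $b_i=b_j\cdot b_l$. We write $w\equiv_k v$ if Duplicator has a winning strategy in the $k$-round game. *)

(* Defs.v *)
From mathcomp Require Import all_boot.
Set Implicit Arguments. Unset Strict Implicit. Unset Printing Implicit Defensive.

Section FactorStructures.
Variable Sigma : finType.
Notation word := (seq Sigma).

(* Elements of the universe of A_w: [None] is bottom, [Some u] is a word. *)
Definition elt := option word.

Definition is_fac (w u : word) : bool := infix u w.

Definition in_univ (w : word) (x : elt) : bool :=
  if x is Some u then is_fac w u else true.

Definition Rcat (x y z : elt) : bool :=
  match x, y, z with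
  | Some x, Some y, Some z => x == y ++ z
  | _, _, _ => false
  end.

Definition consts (w : word) : seq elt :=
  Some [::] :: [seq (if a \in w then Some [:: a] else None) | a <- enum Sigma].

Definition partial_iso (w v : word) (a b : seq elt) : Prop :=
  let A := a ++ consts w in
  let B := b ++ consts v in
  size a = size b /\
  (forall i c, i < size A -> c < size (consts w) ->
     (nth None A i == nth None (consts w) c) = (nth None B i == nth None (consts v) c)) /\
  (forall i j, i < size A -> j < size A ->
     (nth None A i == nth None A j) = (nth None B i == nth None B j)) /\
  (forall i j l, i < size A -> j < size A -> l < size A ->
     Rcat (nth None A i) (nth None A j) (nth None A l)
     = Rcat (nth None B i) (nth None B j) (nth None B l)).

Fixpoint dup_wins (w v : word) (k : nat) (a b : seq elt) : Prop :=
  match k with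
  | 0 => partial_iso w v a b
  | k'.+1 =>
      (forall x, in_univ w x ->
         exists2 y, in_univ v y & dup_wins w v k' (rcons a x) (rcons b y)) /\
      (forall y, in_univ v y ->
         exists2 x, in_univ w x & dup_wins w v k' (rcons a x) (rcons b y))
  end.

Definition ef_equiv (k : nat) (w v : word) : Prop := dup_wins w v k [::] [::].

End FactorStructures.

(* Main.v *)
Require Import Defs.
From mathcomp Require Import all_boot.
Set Implicit Arguments. Unset Strict Implicit. Unset Printing Implicit Defensive.

Section Game.
Variable Sigma : finType.
Notation word := (seq Sigma).
Notation el := (option word).
Implicit Types (w v u : word) (P Q : seq (el * el)).

Definition PI P := forall p1 q1 p2 q2 p3 q3, (p1,q1) \in P -> (p2,q2) \in P -> (p3,q3) \in P ->
  Rcat p1 p2 p3 = Rcat q1 q2 q3.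

Fixpoint win w v n P : Prop :=
  match n with
  | 0 => PI P
  | n'.+1 => (forall x, in_univ w x -> exists2 y, in_univ v y & win w v n' ((x,y)::P)) /\
             (forall y, in_univ v y -> exists2 x, in_univ w x & win w v n' ((x,y)::P))
  end.

Lemma PI_sub P Q : {subset P <= Q} -> PI Q -> PI P.
Proof. by move=> sPQ HQ p1 q1 p2 q2 p3 q3 /sPQ h1 /sPQ h2 /sPQ h3; apply: HQ. Qed.

Lemma win_eq w v n P Q : P =i Q -> win w v n P -> win w v n Q.
Proof.
elim: n P Q => [|n IH] P Q ePQ /=.
  by apply: PI_sub => x; rewrite ePQ.
case=> [Hf Hb]; split.
  move=> x /Hf [y Hy Hw]; exists y => //; apply: IH Hw => z; by rewrite !inE ePQ.
move=> y /Hb [x Hx Hw]; exists x => //; apply: IH Hw => z; by rewrite !inE ePQ.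
Qed.

Definition sw (pq : el * el) := (pq.2, pq.1).

Lemma mem_sw P a b : ((a,b) \in map sw P) = ((b,a) \in P).
Proof.
have -> : (a,b) = sw (b,a) by [].
by rewrite mem_map // => [[? ?] [? ?]] [-> ->].
Qed.

Lemma PI_sw P : PI P -> PI (map sw P).
Proof.
move=> H p1 q1 p2 q2 p3 q3; rewrite !mem_sw => h1 h2 h3; symmetry; exact: H.
Qed.

Lemma win_sw w v n P : win w v n P -> win v w n (map sw P).
Proof.
elim: n w v P => [|n IH] w v P /=; first exact: PI_sw.
case=> [Hf Hb]; split.
  by move=> y /Hb [x Hx Hw]; exists x => //; apply: (IH _ _ _ Hw).
by move=> x /Hf [y Hy Hw]; exists y => //; apply: (IH _ _ _ Hw).
Qed.

Definition cp w v := zip (consts w) (consts v).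

Definition Good w v P :=
  (forall p q, (p,q) \in P -> in_univ w p /\ in_univ v q) /\ {subset cp w v <= P}.

Definition W w v n P := Good w v P /\ win w v n P.

Lemma size_consts w : size (consts w) = (size (enum Sigma)).+1.
Proof. by rewrite /= size_map. Qed.

Lemma cp_sw w v : cp v w = map sw (cp w v).
Proof.
rewrite /cp /consts; set e := enum Sigma; rewrite /= !zip_map; congr (_ :: _).
by rewrite -[RHS]map_comp.
Qed.

Lemma Good_sw w v P : Good w v P -> Good v w (map sw P).
Proof.
case=> [H1 H2]; split.
  by move=> p q; rewrite mem_sw => /H1 [].
by rewrite cp_sw => x /mapP [y /H2 hy ->]; rewrite mem_map // => [[? ?] [? ?]] [-> ->].
Qed.

Lemma W_sw w v n P : W w v n P -> W v w n (map sw P).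
Proof. by case=> [H1 H2]; split; [apply: Good_sw | apply: win_sw]. Qed.

Lemma Good_cons w v P x y : Good w v P -> in_univ w x -> in_univ v y -> Good w v ((x,y)::P).
Proof.
case=> [H1 H2] hx hy; split.
  by move=> p q; rewrite inE => /orP [/eqP [-> ->] | /H1].
by move=> z /H2 hz; rewrite inE hz orbT.
Qed.

Lemma W_PI w v n P : W w v n P -> PI P.
Proof.
elim: n P => [|n IH] P [HG /= HW] //.
case: HW => [Hf _]; case: (Hf None isT) => y hy hw.
apply: (@PI_sub _ ((None,y)::P)); first by move=> z hz; rewrite inE hz orbT.
by apply: IH; split => //; apply: Good_cons.
Qed.

Lemma eps_in w v P : Good w v P -> (Some [::], Some [::]) \in P.
Proof. by case=> [_ H]; apply: H; rewrite /cp /= mem_head. Qed.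

Lemma eq_Rcat (x y : el) :
  (x == y) = Rcat x y (Some [::]) || (~~ Rcat x x (Some [::]) && ~~ Rcat y y (Some [::])).
Proof. by case: x y => [a|] [b|] //=; rewrite !cats0 ?eqxx ?orbF. Qed.

Lemma PI_eq P p1 q1 p2 q2 : PI P -> (Some [::], Some [::]) \in P ->
  (p1,q1) \in P -> (p2,q2) \in P -> (p1 == p2) = (q1 == q2).
Proof.
move=> H he h1 h2.
by rewrite !eq_Rcat (H _ _ _ _ _ _ h1 h2 he) (H _ _ _ _ _ _ h1 h1 he) (H _ _ _ _ _ _ h2 h2 he).
Qed.

Lemma PI_some P a q : PI P -> (Some [::], Some [::]) \in P ->
  (Some a, q) \in P -> exists b, q = Some b.
Proof.
move=> H he h; have := H _ _ _ _ _ _ h h he; rewrite /= cats0 eqxx.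
by case: q h => [b|] //; exists b.
Qed.

Lemma W_some w v n P a q : W w v n P -> (Some a, q) \in P -> exists b, q = Some b.
Proof. move=> HW; apply: PI_some (W_PI HW) (eps_in HW.1). Qed.

Lemma cpc_in w v P c : Good w v P ->
  ((if c \in w then Some [:: c] else None), (if c \in v then Some [:: c] else None)) \in P.
Proof.
case=> [_ H]; apply: H; rewrite /cp /= inE zip_map; apply/orP; right.
by apply/mapP; exists c => //; rewrite mem_enum.
Qed.

Lemma cin w v n P c : W w v n P -> (c \in w) = (c \in v).
Proof.
move=> HW; have h := cpc_in c HW.1.
have := W_PI HW h h (eps_in HW.1).
by case: (c \in w); case: (c \in v) => //=; rewrite eqxx.
Qed.

Lemma constv w v n P c : W w v n P -> c \in w -> (Some [:: c], Some [:: c]) \in P.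
Proof.
move=> HW hc; have := cpc_in c HW.1; by rewrite -(cin c HW) hc.
Qed.

Lemma Rtr w v n P a1 a2 a3 q1 b2 b3 : W w v n P ->
  (Some a1, q1) \in P -> (Some a2, Some b2) \in P -> (Some a3, Some b3) \in P ->
  a1 = a2 ++ a3 -> q1 = Some (b2 ++ b3).
Proof.
move=> HW h1 h2 h3 e; have := W_PI HW h1 h2 h3; rewrite /= e eqxx.
by case: q1 {h1} => // b /esym /eqP ->.
Qed.

Lemma pickS w v n P u : W w v n.+1 P -> is_fac w u ->
  exists2 u', is_fac v u' & W w v n ((Some u, Some u')::P).
Proof.
case=> [HG [Hf _]] hu; case: (Hf (Some u) hu) => y hy hw.
have HW : W w v n ((Some u, y)::P) by split => //; apply: Good_cons.
case: (W_some HW (mem_head _ _)) => b eb; subst y.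
by exists b.
Qed.

Lemma pickN w v n P : W w v n.+1 P -> exists y, W w v n ((None, y)::P).
Proof.
case=> [HG [Hf _]]; case: (Hf None isT) => y hy hw.
by exists y; split => //; apply: Good_cons.
Qed.

Lemma fac_of w v n P u q : W w v n P -> (Some u, q) \in P -> is_fac w u.
Proof. by case=> [[H _] _] /H []. Qed.

Lemma facv_of w v n P p u : W w v n P -> (p, Some u) \in P -> is_fac v u.
Proof. by case=> [[H _] _] /H []. Qed.

Lemma E w v u : forall n P q, W w v n P -> (Some u, q) \in P -> size u <= n.+1 -> q = Some u.
Proof.
elim: u => [|c u IH] n P q HW hq hs.
  by apply/eqP; rewrite -(PI_eq (W_PI HW) (eps_in HW.1) hq (eps_in HW.1)).
have hcw : c \in w by apply: (mem_infix (fac_of HW hq)); rewrite mem_head.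
case: u IH hq hs => [|d u] IH hq hs.
  by apply/eqP; rewrite -(PI_eq (W_PI HW) (eps_in HW.1) hq (constv HW hcw)).
case: n HW hs => [|n] HW hs //.
have hf : is_fac w (d :: u) by apply: infix_trans (fac_of HW hq); apply: (suffix_infix [:: c]).
case: (pickS HW hf) => u' hu' HW'.
have e : u' = d :: u.
  by case: (IH _ _ _ HW' (mem_head _ _) hs).
subst u'.
apply: (Rtr (a2 := [:: c]) (a3 := d :: u) (b2 := [:: c]) (b3 := d :: u) HW') => //.
- by rewrite inE hq orbT.
- by rewrite inE (constv HW hcw) orbT.
- exact: mem_head.
Qed.

Lemma pickC w v n P u : W w v n.+1 P -> is_fac w u -> size u <= n.+1 ->
  W w v n ((Some u, Some u)::P).
Proof.
move=> HW hf hs; case: (pickS HW hf) => u' _ HW'.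
have [e] := E HW' (mem_head _ _) hs; by rewrite e in HW'.
Qed.


Lemma swK P : map sw (map sw P) = P.
Proof. by elim: P => [|[p q] P IH] //=; rewrite IH. Qed.

Lemma Ev w v n P p u : W w v n P -> (p, Some u) \in P -> size u <= n.+1 -> p = Some u.
Proof. by move=> /W_sw HW h; apply: (E HW); rewrite mem_sw. Qed.

Lemma Rtrv w v n P b1 b2 b3 p1 a2 a3 : W w v n P ->
  (p1, Some b1) \in P -> (Some a2, Some b2) \in P -> (Some a3, Some b3) \in P ->
  b1 = b2 ++ b3 -> p1 = Some (a2 ++ a3).
Proof. by move=> /W_sw HW h1 h2 h3; apply: (Rtr HW); rewrite mem_sw. Qed.

Lemma pickSv w v n P u' : W w v n.+1 P -> is_fac v u' ->
  exists2 u, is_fac w u & W w v n ((Some u, Some u')::P).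
Proof.
move=> /W_sw HW hu; case: (pickS HW hu) => u hu' /W_sw HW'.
by exists u => //; rewrite /= swK in HW'.
Qed.

Lemma ext_inf u v : infix u v -> u != v -> exists c, infix (rcons u c) v || infix (c :: u) v.
Proof.
case/infixP => [s [s' ev]] nuv; case: s' ev => [|c s'] ev.
  case/lastP: s ev => [|s c] ev.
    by rewrite ev /= cats0 eqxx in nuv.
  exists c; apply/orP; right; apply/infixP; exists s, [::].
  by rewrite ev -cats1 -!catA.
exists c; apply/orP; left; apply/infixP; exists s, s'.
by rewrite ev cat_rcons.
Qed.

Lemma Wwhole w v n P q : W w v n.+1 P -> (Some w, q) \in P -> q = Some v.
Proof.
move=> HW hq; case: (W_some HW hq) => z ez; subst q.
have hz := facv_of HW hq.
case: (eqVneq z v) => [->//|nz].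
case: (ext_inf hz nz) => c /orP [] h; case: (HW) => [HG [_ Hb]].
- case: (Hb (Some (rcons z c)) h) => x hx hw.
  have HW2 : W w v n ((x, Some (rcons z c))::P) by split => //; apply: Good_cons.
  have hcv : c \in v by apply: (mem_infix h); rewrite mem_rcons mem_head.
  have hcw : c \in w by rewrite (cin c HW).
  have ex := Rtrv (a2 := w) (a3 := [:: c]) HW2 (mem_head _ _) _ _ (esym (cats1 z c)).
  rewrite ex ?inE ?hq ?(constv HW hcw) ?orbT // in hw HW2.
  have := fac_of HW2 (mem_head _ _) => /infixW /size_subseq.
  by rewrite size_cat addn1 ltnn.
- case: (Hb (Some (c :: z)) h) => x hx hw.
  have HW2 : W w v n ((x, Some (c :: z))::P) by split => //; apply: Good_cons.
  have hcv : c \in v by apply: (mem_infix h); rewrite mem_head.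
  have hcw : c \in w by rewrite (cin c HW).
  have ex := Rtrv (a2 := [:: c]) (a3 := w) (b2 := [:: c]) (b3 := z) HW2 (mem_head _ _) _ _ erefl.
  rewrite ex ?inE ?hq ?(constv HW hcw) ?orbT // in hw HW2.
  have := fac_of HW2 (mem_head _ _) => /infixW /size_subseq.
  by rewrite /= ltnn.
Qed.

Lemma Wsuf w v n P x q p : W w v n.+2 P -> (Some x, q) \in P -> w = p ++ x ->
  exists x', q = Some x' /\ exists p', v = p' ++ x'.
Proof.
move=> HW hq ew; case: (W_some HW hq) => x' ex; subst q; exists x'; split => //.
case: (pickS HW (infix_refl w)) => y hy HW1.
have [ey] := Wwhole HW1 (mem_head _ _); subst y.
have hp : is_fac w p by rewrite /is_fac ew prefix_infix.
case: (pickS HW1 hp) => p' hp' HW2; exists p'.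
have h1 : (Some w, Some v) \in (Some p, Some p') :: (Some w, Some v) :: P.
  by rewrite !inE eqxx !orbT.
have h3 : (Some x, Some x') \in (Some p, Some p') :: (Some w, Some v) :: P.
  by rewrite !inE hq !orbT.
by case: (Rtr HW2 h1 (mem_head _ _) h3 ew).
Qed.

Lemma Wpre w v n P x q s : W w v n.+2 P -> (Some x, q) \in P -> w = x ++ s ->
  exists x', q = Some x' /\ exists s', v = x' ++ s'.
Proof.
move=> HW hq ew; case: (W_some HW hq) => x' ex; subst q; exists x'; split => //.
case: (pickS HW (infix_refl w)) => y hy HW1.
have [ey] := Wwhole HW1 (mem_head _ _); subst y.
have hp : is_fac w s by rewrite /is_fac ew suffix_infix.
case: (pickS HW1 hp) => s' hs' HW2; exists s'.
have h1 : (Some w, Some v) \in (Some s, Some s') :: (Some w, Some v) :: P.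
  by rewrite !inE eqxx !orbT.
have h3 : (Some x, Some x') \in (Some s, Some s') :: (Some w, Some v) :: P.
  by rewrite !inE hq !orbT.
by case: (Rtr HW2 h1 h3 (mem_head _ _) ew).
Qed.

Lemma mem_zip_nth (A B : seq el) p q : size A = size B -> (p,q) \in zip A B ->
  exists2 i, i < size A & p = nth None A i /\ q = nth None B i.
Proof.
move=> hs /(nthP (None,None)) [i]; rewrite size_zip hs minnn => hi.
by rewrite nth_zip // => [[<- <-]]; exists i; rewrite ?hs.
Qed.

Lemma zip_nth_mem (A B : seq el) i : size A = size B -> i < size A ->
  (nth None A i, nth None B i) \in zip A B.
Proof.
by move=> hs hi; rewrite -nth_zip //; apply: mem_nth; rewrite size_zip -hs minnn.
Qed.

Lemma PI_iso w v a b : size a = size b ->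
  partial_iso w v a b <-> PI (zip (a ++ consts w) (b ++ consts v)).
Proof.
move=> hs.
have hs' : size (a ++ consts w) = size (b ++ consts v) by rewrite !size_cat hs !size_consts.
rewrite /partial_iso; cbv zeta; split.
  case=> _ [_ [_ H4]] p1 q1 p2 q2 p3 q3.
  move=> /(mem_zip_nth hs') [i hi [-> ->]] /(mem_zip_nth hs') [j hj [-> ->]].
  move=> /(mem_zip_nth hs') [l hl [-> ->]]; exact: H4.
move=> H.
have he : (Some [::], Some [::]) \in zip (a ++ consts w) (b ++ consts v).
  have hi : size a < size (a ++ consts w) by rewrite size_cat size_consts addnS ltnS leq_addr.
  have := zip_nth_mem hs' hi.
  by rewrite nth_cat ltnn subnn nth_cat hs ltnn subnn.
split => //; split; [|split].
- move=> i c hi hc.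
  have -> : nth None (consts w) c = nth None (a ++ consts w) (size a + c).
    by rewrite nth_cat ltnNge leq_addr /= addKn.
  have -> : nth None (consts v) c = nth None (b ++ consts v) (size a + c).
    by rewrite nth_cat hs ltnNge leq_addr /= addKn.
  apply: (PI_eq H he); apply: zip_nth_mem => //.
  by rewrite size_cat ltn_add2l.
- by move=> i j hi hj; apply: (PI_eq H he); apply: zip_nth_mem.
- by move=> i j l hi hj hl; apply: H; apply: zip_nth_mem.
Qed.

Lemma mem_Zr w v a b x y : size a = size b ->
  zip (rcons a x ++ consts w) (rcons b y ++ consts v) =i (x,y) :: zip (a ++ consts w) (b ++ consts v).
Proof.
move=> hs z; rewrite -!cats1 -!catA !zip_cat //= !mem_cat !inE.
by rewrite !mem_cat !inE orbCA.
Qed.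

Lemma dup_win w v n : forall a b, size a = size b ->
  dup_wins w v n a b <-> win w v n (zip (a ++ consts w) (b ++ consts v)).
Proof.
elim: n => [|n IH] a b hs; first exact: PI_iso.
have hs1 x y : size (rcons a x) = size (rcons b y) by rewrite !size_rcons hs.
split; case=> Hf Hb; split.
- move=> x hx; case: (Hf x hx) => y hy hd; exists y => //.
  by apply: (win_eq (mem_Zr _ _ _ _ hs)); apply/IH.
- move=> y hy; case: (Hb y hy) => x hx hd; exists x => //.
  by apply: (win_eq (mem_Zr _ _ _ _ hs)); apply/IH.
- move=> x hx; case: (Hf x hx) => y hy hd; exists y => //.
  apply/IH => //; apply: win_eq hd => z; by rewrite mem_Zr.
- move=> y hy; case: (Hb y hy) => x hx hd; exists x => //.
  apply/IH => //; apply: win_eq hd => z; by rewrite mem_Zr.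
Qed.

Lemma ef_win w v n : ef_equiv n w v <-> win w v n (cp w v).
Proof. have := @dup_win w v n [::] [::] erefl. by []. Qed.

Lemma cp_map w v : cp w v = (Some [::], Some [::]) ::
  [seq ((if c \in w then Some [:: c] else None), (if c \in v then Some [:: c] else None)) | c <- enum Sigma].
Proof. by rewrite /cp /consts; set e := enum Sigma; rewrite /= zip_map. Qed.

Lemma Good_cp w v : Good w v (cp w v).
Proof.
split => // p q; rewrite cp_map inE => /orP [/eqP [-> ->]|] //=.
  by split; apply: infix0s.
case/mapP => c _ [-> ->]; split; case: ifP => h //=; by rewrite /is_fac infix1s.
Qed.

End Game.
Arguments sw {Sigma}.

Section Prod.
Variable Sigma : finType.
Notation word := (seq Sigma).
Notation el := (option word).

Lemma mcons (T : eqType) (z a : T) s : z \in s -> z \in a :: s.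
Proof. by move=> h; rewrite inE h orbT. Qed.

Lemma fac_pre (w a b : word) : is_fac w (a ++ b) -> is_fac w a.
Proof. by move=> h; exact: (@infix_trans _ _ _ _ (prefix_infix a b) h). Qed.

Lemma fac_suf (w a b : word) : is_fac w (a ++ b) -> is_fac w b.
Proof. by move=> h; exact: (@infix_trans _ _ _ _ (suffix_infix a b) h). Qed.

Lemma cat_split (x y a b : word) : x ++ y = a ++ b -> size a <= size x ->
  exists s, x = a ++ s /\ b = s ++ y.
Proof.
move=> e hs; exists (drop (size a) x); split.
  have ha : take (size a) x = a by rewrite -(takel_cat y hs) e take_size_cat.
  by rewrite -{1}(cat_take_drop (size a) x) ha.
have : drop (size a) (x ++ y) = b by rewrite e drop_size_cat.
rewrite drop_cat; case: ltnP => h; first by move=> <-.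
have eq : size a = size x by apply/eqP; rewrite eqn_leq hs h.
by rewrite eq subnn drop0 drop_size => <-.
Qed.

Lemma fac_cat (w1 w2 u : word) : is_fac (w1 ++ w2) u -> ~~ is_fac w1 u -> ~~ is_fac w2 u ->
  exists x y p s, [/\ u = x ++ y, w1 = p ++ x & w2 = y ++ s].
Proof.
case/infixP => [p [s e]] n1 n2.
case: (leqP (size p) (size w1)) => h.
  case: (cat_split e h) => t [e1 e2].
  case: (leqP (size t) (size u)) => h2.
    case: (cat_split e2 h2) => y [e3 e4].
    by exists t, y, p, s.
  case: (cat_split (esym e2) (ltnW h2)) => q [e3 e4].
  by move: n1; rewrite e1 e3 /is_fac infix_infix.
case: (cat_split (esym e) (ltnW h)) => q [e3 e4].
by move: n2; rewrite e4 /is_fac infix_infix.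
Qed.

Variables (w1 w2 v1 v2 : word) (r : nat).
Lemma lr1 k : k <= r -> k <= r.+1. Proof. exact: leqW. Qed.
Lemma lr2 k : k <= r -> k <= r.+2. Proof. by move=> h; do 2 apply: leqW. Qed.
Lemma lr3 k : k <= r -> k <= r.+3. Proof. by move=> h; do 3 apply: leqW. Qed.
Hypothesis HC : forall u, (is_fac w1 u && is_fac w2 u) = (is_fac v1 u && is_fac v2 u).
Hypothesis Hr : forall u, is_fac w1 u && is_fac w2 u -> size u <= r.

Inductive tag (P1 P2 : seq (el * el)) : el * el -> Prop :=
| TB : tag P1 P2 (None, None)
| TC u : is_fac w1 u -> is_fac w2 u -> (Some u, Some u) \in P1 -> (Some u, Some u) \in P2 ->
    tag P1 P2 (Some u, Some u)
| TL u u' : is_fac w1 u -> ~~ is_fac w2 u -> is_fac v1 u' -> ~~ is_fac v2 u' ->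
    (Some u, Some u') \in P1 -> tag P1 P2 (Some u, Some u')
| TR u u' : ~~ is_fac w1 u -> is_fac w2 u -> ~~ is_fac v1 u' -> is_fac v2 u' ->
    (Some u, Some u') \in P2 -> tag P1 P2 (Some u, Some u')
| TX x y x' y' : ~~ is_fac w1 (x ++ y) -> ~~ is_fac w2 (x ++ y) ->
    ~~ is_fac v1 (x' ++ y') -> ~~ is_fac v2 (x' ++ y') ->
    (Some x, Some x') \in P1 -> (Some y, Some y') \in P2 -> tag P1 P2 (Some (x ++ y), Some (x' ++ y')).

Lemma tag_in1 P1 P2 pq : tag P1 P2 pq -> forall a, pq.1 = Some a -> is_fac w1 a -> pq \in P1.
Proof.
case=> [|u h1 h2 m1 m2|u u' h1 h2 h3 h4 m|u u' h1 h2 h3 h4 m|x y x' y' h1 h2 h3 h4 m1 m2] a //= [<-].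
all: by rewrite ?(negbTE h1) ?(negbTE h2).
Qed.

Lemma tag_in2 P1 P2 pq : tag P1 P2 pq -> forall a, pq.1 = Some a -> is_fac w2 a -> pq \in P2.
Proof.
case=> [|u h1 h2 m1 m2|u u' h1 h2 h3 h4 m|u u' h1 h2 h3 h4 m|x y x' y' h1 h2 h3 h4 m1 m2] a //= [<-].
all: by rewrite ?(negbTE h1) ?(negbTE h2).
Qed.

Lemma tag_X P1 P2 pq : tag P1 P2 pq -> forall a, pq.1 = Some a -> ~~ is_fac w1 a -> ~~ is_fac w2 a ->
  exists x y x' y', [/\ a = x ++ y, pq.2 = Some (x' ++ y'), (Some x, Some x') \in P1 & (Some y, Some y') \in P2].
Proof.
case=> [|u h1 h2 m1 m2|u u' h1 h2 h3 h4 m|u u' h1 h2 h3 h4 m|x y x' y' h1 h2 h3 h4 m1 m2] a //= [<-].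
all: try by rewrite ?h1 ?h2.
by move=> _ _; exists x, y, x', y'.
Qed.


Lemma FV P1 P2 p1 q1 p2 q2 p3 q3 : W w1 v1 r.+2 P1 -> W w2 v2 r.+2 P2 ->
  tag P1 P2 (p1,q1) -> tag P1 P2 (p2,q2) -> tag P1 P2 (p3,q3) ->
  Rcat p1 p2 p3 -> Rcat q1 q2 q3.
Proof.
move=> W1 W2 t1 t2 t3.
case: p1 t1 => [u|] t1 //; case: p2 t2 => [a|] t2 //; case: p3 t3 => [b|] t3 //= /eqP eu.
case h1: (is_fac w1 u).
  have ha : is_fac w1 a by apply: (fac_pre (b := b)); rewrite -eu.
  have hb : is_fac w1 b by apply: (fac_suf (a := a)); rewrite -eu.
  have := W_PI W1 (tag_in1 t1 erefl h1) (tag_in1 t2 erefl ha) (tag_in1 t3 erefl hb).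
  by rewrite /= eu eqxx => <-.
case h2: (is_fac w2 u).
  have ha : is_fac w2 a by apply: (fac_pre (b := b)); rewrite -eu.
  have hb : is_fac w2 b by apply: (fac_suf (a := a)); rewrite -eu.
  have := W_PI W2 (tag_in2 t1 erefl h2) (tag_in2 t2 erefl ha) (tag_in2 t3 erefl hb).
  by rewrite /= eu eqxx => <-.
case: (tag_X t1 erefl (negbT h1) (negbT h2)) => x1 [y1 [x1' [y1' [ex /= -> m11 m12]]]].
have fx1 : is_fac w1 x1 := fac_of W1 m11.
have fy1 : is_fac w2 y1 := fac_of W2 m12.
have exy : x1 ++ y1 = a ++ b by rewrite -ex.
case: (leqP (size a) (size x1)) => hsz.
  case: (cat_split exy hsz) => s [ex1 eb].
  have ha : is_fac w1 a by apply: (fac_pre (b := s)); rewrite -ex1.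
  have m2 := tag_in1 t2 erefl ha.
  case: (W_some W1 m2) => a' ea'; subst q2.
  have fs : is_fac w1 s by apply: (fac_suf (a := a)); rewrite -ex1.
  case hb1: (is_fac w1 b).
    have m3 := tag_in1 t3 erefl hb1.
    case: (W_some W1 m3) => b' eb'; subst q3.
    have fy1w1 : is_fac w1 y1 by apply: (fac_suf (a := s)); rewrite -eb.
    have sy1 : size y1 <= r by apply: Hr; rewrite fy1w1 fy1.
    have [ey] := E W2 m12 (lr3 sy1); subst y1'.
    case: (pickS W1 fs) => s' _ W1a.
    have W1b := pickC W1a fy1w1 (lr1 sy1).
    have [e1] := Rtr W1b (mcons _ (mcons _ m11)) (mcons _ (mcons _ m2)) (mcons _ (mem_head _ _)) ex1.
    have [e2] := Rtr W1b (mcons _ (mcons _ m3)) (mcons _ (mem_head _ _)) (mem_head _ _) eb.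
    by rewrite /= e1 e2 catA.
  case hb2: (is_fac w2 b).
    have m3 := tag_in2 t3 erefl hb2.
    case: (W_some W2 m3) => b' eb'; subst q3.
    have fs2 : is_fac w2 s by apply: (fac_pre (b := y1)); rewrite -eb.
    have ss : size s <= r by apply: Hr; rewrite fs fs2.
    have W2a := pickC W2 fs2 (lr2 ss).
    have [e2] := Rtr W2a (mcons _ m3) (mem_head _ _) (mcons _ m12) eb.
    have W1a := pickC W1 fs (lr2 ss).
    have [e1] := Rtr W1a (mcons _ m11) (mcons _ m2) (mem_head _ _) ex1.
    by rewrite /= e1 e2 catA.
  case: (tag_X t3 erefl (negbT hb1) (negbT hb2)) => x3 [y3 [x3' [y3' [eb3 /= -> m31 m32]]]].
  have ex3 : x3 ++ y3 = s ++ y1 by rewrite -eb3.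
  have fx3 : is_fac w1 x3 := fac_of W1 m31.
  have fy3 : is_fac w2 y3 := fac_of W2 m32.
  case: (leqP (size s) (size x3)) => h.
    case: (cat_split ex3 h) => t [ex3a ey1].
    have ft1 : is_fac w1 t by apply: (fac_suf (a := s)); rewrite -ex3a.
    have ft2 : is_fac w2 t by apply: (fac_pre (b := y3)); rewrite -ey1.
    have st : size t <= r by apply: Hr; rewrite ft1 ft2.
    case: (pickS W1 fs) => s' _ W1a.
    have W1b := pickC W1a ft1 (lr1 st).
    have [e1] := Rtr W1b (mcons _ (mcons _ m11)) (mcons _ (mcons _ m2)) (mcons _ (mem_head _ _)) ex1.
    have [e2] := Rtr W1b (mcons _ (mcons _ m31)) (mcons _ (mem_head _ _)) (mem_head _ _) ex3a.
    have W2a := pickC W2 ft2 (lr2 st).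
    have [e3] := Rtr W2a (mcons _ m12) (mem_head _ _) (mcons _ m32) ey1.
    by rewrite /= e1 e2 e3 !catA.
  case: (cat_split (esym ex3) (ltnW h)) => t [es ey3].
  have ft1 : is_fac w1 t by apply: (fac_suf (a := x3)); rewrite -es.
  have ft2 : is_fac w2 t by apply: (fac_pre (b := y1)); rewrite -ey3.
  have st : size t <= r by apply: Hr; rewrite ft1 ft2.
  case: (pickS W1 fs) => s' _ W1a.
  have W1b := pickC W1a ft1 (lr1 st).
  have [e1] := Rtr W1b (mcons _ (mcons _ m11)) (mcons _ (mcons _ m2)) (mcons _ (mem_head _ _)) ex1.
  have [e2] := Rtr W1b (mcons _ (mem_head _ _)) (mcons _ (mcons _ m31)) (mem_head _ _) es.
  have W2a := pickC W2 ft2 (lr2 st).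
  have [e3] := Rtr W2a (mcons _ m32) (mem_head _ _) (mcons _ m12) ey3.
  by rewrite /= e1 e2 e3 !catA.
case: (cat_split (esym exy) (ltnW hsz)) => s [ea ey1].
have hb : is_fac w2 b by apply: (fac_suf (a := s)); rewrite -ey1.
have m3 := tag_in2 t3 erefl hb.
case: (W_some W2 m3) => b' eb'; subst q3.
have fs : is_fac w2 s by apply: (fac_pre (b := b)); rewrite -ey1.
case ha2: (is_fac w2 a).
  have m2 := tag_in2 t2 erefl ha2.
  case: (W_some W2 m2) => a' ea'; subst q2.
  have fx1w2 : is_fac w2 x1 by apply: (fac_pre (b := s)); rewrite -ea.
  have sx1 : size x1 <= r by apply: Hr; rewrite fx1 fx1w2.
  have [ex1'] := E W1 m11 (lr3 sx1); subst x1'.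
  case: (pickS W2 fs) => s' _ W2a.
  have W2b := pickC W2a fx1w2 (lr1 sx1).
  have [e1] := Rtr W2b (mcons _ (mcons _ m2)) (mem_head _ _) (mcons _ (mem_head _ _)) ea.
  have [e2] := Rtr W2b (mcons _ (mcons _ m12)) (mcons _ (mem_head _ _)) (mcons _ (mcons _ m3)) ey1.
  by rewrite /= e1 e2 catA.
case ha1: (is_fac w1 a).
  have m2 := tag_in1 t2 erefl ha1.
  case: (W_some W1 m2) => a' ea'; subst q2.
  have fs1 : is_fac w1 s by apply: (fac_suf (a := x1)); rewrite -ea.
  have ss : size s <= r by apply: Hr; rewrite fs1 fs.
  have W1a := pickC W1 fs1 (lr2 ss).
  have [e1] := Rtr W1a (mcons _ m2) (mcons _ m11) (mem_head _ _) ea.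
  have W2a := pickC W2 fs (lr2 ss).
  have [e2] := Rtr W2a (mcons _ m12) (mem_head _ _) (mcons _ m3) ey1.
  by rewrite /= e1 e2 catA.
case: (tag_X t2 erefl (negbT ha1) (negbT ha2)) => x2 [y2 [x2' [y2' [ea2 /= -> m21 m22]]]].
have ex2 : x1 ++ s = x2 ++ y2 by rewrite -ea2.
have fx2 : is_fac w1 x2 := fac_of W1 m21.
have fy2 : is_fac w2 y2 := fac_of W2 m22.
case: (leqP (size x2) (size x1)) => h.
  case: (cat_split ex2 h) => t [ex1 ey2].
  have ft1 : is_fac w1 t by apply: (fac_suf (a := x2)); rewrite -ex1.
  have ft2 : is_fac w2 t by apply: (fac_pre (b := s)); rewrite -ey2.
  have st : size t <= r by apply: Hr; rewrite ft1 ft2.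
  have W1a := pickC W1 ft1 (lr2 st).
  have [e1] := Rtr W1a (mcons _ m11) (mcons _ m21) (mem_head _ _) ex1.
  case: (pickS W2 fs) => s' _ W2a.
  have W2b := pickC W2a ft2 (lr1 st).
  have [e2] := Rtr W2b (mcons _ (mcons _ m22)) (mem_head _ _) (mcons _ (mem_head _ _)) ey2.
  have [e3] := Rtr W2b (mcons _ (mcons _ m12)) (mcons _ (mem_head _ _)) (mcons _ (mcons _ m3)) ey1.
  by rewrite /= e1 e2 e3 !catA.
case: (cat_split (esym ex2) (ltnW h)) => t [ex2a es].
have ft1 : is_fac w1 t by apply: (fac_suf (a := x1)); rewrite -ex2a.
have ft2 : is_fac w2 t by apply: (fac_pre (b := y2)); rewrite -es.
have st : size t <= r by apply: Hr; rewrite ft1 ft2.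
have W1a := pickC W1 ft1 (lr2 st).
have [e1] := Rtr W1a (mcons _ m21) (mcons _ m11) (mem_head _ _) ex2a.
case: (pickS W2 fs) => s' _ W2a.
have W2b := pickC W2a ft2 (lr1 st).
have [e2] := Rtr W2b (mcons _ (mem_head _ _)) (mem_head _ _) (mcons _ (mcons _ m22)) es.
have [e3] := Rtr W2b (mcons _ (mcons _ m12)) (mcons _ (mem_head _ _)) (mcons _ (mcons _ m3)) ey1.
by rewrite /= e1 e3 e2 !catA.
Qed.


Lemma forth n P1 P2 x : r.+2 <= n -> W w1 v1 n.+1 P1 -> W w2 v2 n.+1 P2 -> in_univ (w1 ++ w2) x ->
  exists2 y, in_univ (v1 ++ v2) y &
    exists P1', exists P2', [/\ W w1 v1 n P1', W w2 v2 n P2', {subset P1 <= P1'},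
                               {subset P2 <= P2'} & tag P1' P2' (x,y)].
Proof.
case: n => [|[|n0]] hn //.
have hrn k : k <= r -> k <= n0.+1 by move=> h; apply: (leq_trans h); move: hn; rewrite !ltnS => /leqW.
have hrn2 k : k <= r -> k <= n0.+3 by move=> /hrn h; do 2 apply: leqW.
move=> W1 W2.
have sub (T: eqType) (z : T) s : {subset s <= z :: s} by move=> ? ?; apply: mcons.
case: x => [u|] hu; last first.
  case: (pickN W1) => y1 W1'; case: (pickN W2) => y2 W2'.
  exists None => //; exists ((None,y1)::P1), ((None,y2)::P2); split => //; try apply: sub.
  exact: TB.
case h1: (is_fac w1 u); case h2: (is_fac w2 u).
- have su : size u <= r by apply: Hr; rewrite h1 h2.
  have W1' := pickC W1 h1 (hrn2 _ su).
  have W2' := pickC W2 h2 (hrn2 _ su).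
  have : is_fac v1 u && is_fac v2 u by rewrite -HC h1 h2.
  case/andP => hv1 hv2.
  exists (Some u); first by apply: infix_catr.
  exists ((Some u, Some u)::P1), ((Some u, Some u)::P2); split => //; try apply: sub.
  by apply: TC => //; apply: mem_head.
- case: (pickS W1 h1) => u' hu' W1'.
  case: (pickN W2) => y2 W2'.
  have nv2 : ~~ is_fac v2 u'.
    apply/negP => hv2.
    have hc : is_fac w1 u' && is_fac w2 u' by rewrite HC hu' hv2.
    have [e] := Ev W1' (mem_head _ _) (hrn2 _ (Hr hc)).
    by move: hc; rewrite -e h2 andbF.
  exists (Some u'); first by apply: infix_catr.
  exists ((Some u, Some u')::P1), ((None, y2)::P2); split => //; try apply: sub.
  by apply: TL => //; rewrite ?h2 //; apply: mem_head.
- case: (pickN W1) => y1 W1'.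
  case: (pickS W2 h2) => u' hu' W2'.
  have nv1 : ~~ is_fac v1 u'.
    apply/negP => hv1.
    have hc : is_fac w1 u' && is_fac w2 u' by rewrite HC hu' hv1.
    have [e] := Ev W2' (mem_head _ _) (hrn2 _ (Hr hc)).
    by move: hc; rewrite -e h1.
  exists (Some u'); first by apply: infix_catl.
  exists ((None, y1)::P1), ((Some u, Some u')::P2); split => //; try apply: sub.
  by apply: TR => //; rewrite ?h1 //; apply: mem_head.
- case: (fac_cat hu (negbT h1) (negbT h2)) => x [y [p [s [eu ew1 ew2]]]]; subst u.
  have hx : is_fac w1 x by rewrite ew1 /is_fac suffix_infix.
  have hy : is_fac w2 y by rewrite ew2 /is_fac prefix_infix.
  case: (pickS W1 hx) => x' hx' W1'.
  case: (pickS W2 hy) => y' hy' W2'.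
  case: (Wsuf W1' (mem_head _ _) ew1) => x'' [[ex''] [p' ev1]]; subst x''.
  case: (Wpre W2' (mem_head _ _) ew2) => y'' [[ey''] [s' ev2]]; subst y''.
  have nv1 : ~~ is_fac v1 (x' ++ y').
    apply/negP => hv.
    have hy'1 : is_fac v1 y' := fac_suf hv.
    have hy'2 : is_fac v2 y' by rewrite ev2 /is_fac prefix_infix.
    have hc : is_fac w1 y' && is_fac w2 y' by rewrite HC hy'1 hy'2.
    have [e] := Ev W2' (mem_head _ _) (hrn2 _ (Hr hc)); subst y'.
    case: (pickSv W1' hv) => z hz W1b.
    have hyw1 : is_fac w1 y by case/andP: hc.
    have W1c := pickC W1b hyw1 (hrn _ (Hr hc)).
    have [ez] := Rtrv W1c (mcons _ (mem_head _ _)) (mcons _ (mcons _ (mem_head _ _))) (mem_head _ _) erefl.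
    by move: hz; rewrite ez h1.
  have nv2 : ~~ is_fac v2 (x' ++ y').
    apply/negP => hv.
    have hx'1 : is_fac v1 x' by rewrite ev1 /is_fac suffix_infix.
    have hx'2 : is_fac v2 x' := fac_pre hv.
    have hc : is_fac w1 x' && is_fac w2 x' by rewrite HC hx'1 hx'2.
    have [e] := Ev W1' (mem_head _ _) (hrn2 _ (Hr hc)); subst x'.
    case: (pickSv W2' hv) => z hz W2b.
    have hxw2 : is_fac w2 x by case/andP: hc.
    have W2c := pickC W2b hxw2 (hrn _ (Hr hc)).
    have [ez] := Rtrv W2c (mcons _ (mem_head _ _)) (mem_head _ _) (mcons _ (mcons _ (mem_head _ _))) erefl.
    by move: hz; rewrite ez h2.
  exists (Some (x' ++ y')).
    by rewrite /= /is_fac ev1 ev2 -catA (catA x'); apply: infix_infix.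
  exists ((Some x, Some x')::P1), ((Some y, Some y')::P2); split => //; try apply: sub.
  by apply: TX => //; rewrite ?h1 ?h2 //; apply: mem_head.
Qed.

Lemma tag_init n1 n2 P1 P2 pq : W w1 v1 n1 P1 -> W w2 v2 n2 P2 ->
  pq \in cp (w1 ++ w2) (v1 ++ v2) -> tag P1 P2 pq.
Proof.
move=> W1 W2; rewrite cp_map inE => /orP [/eqP -> | /mapP [c _ ->]].
  by apply: TC; rewrite ?(eps_in W1.1) ?(eps_in W2.1) //; apply: infix0s.
rewrite !mem_cat -(cin c W1) -(cin c W2).
case h1: (c \in w1); case h2: (c \in w2) => /=.
- by apply: TC; rewrite ?(constv W1 h1) ?(constv W2 h2) // /is_fac infix1s.
- apply: TL; rewrite ?(constv W1 h1) // /is_fac infix1s ?h1 ?h2 //.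
  + by rewrite (cin c W1) in h1.
  + by rewrite (cin c W2) in h2; rewrite h2.
- apply: TR; rewrite ?(constv W2 h2) // /is_fac infix1s ?h1 ?h2 //.
  + by rewrite (cin c W1) in h1; rewrite h1.
  + by rewrite (cin c W2) in h2.
- exact: TB.
Qed.

End Prod.


Section Main.
Variable Sigma : finType.
Notation word := (seq Sigma).
Notation el := (option word).

Lemma tag_mono (w1 w2 v1 v2 : word) P1 P2 Q1 Q2 pq :
  {subset P1 <= Q1} -> {subset P2 <= Q2} -> tag w1 w2 v1 v2 P1 P2 pq -> tag w1 w2 v1 v2 Q1 Q2 pq.
Proof.
move=> s1 s2; case=> *.
- exact: TB.
- by apply: TC => //; [apply: s1 | apply: s2].
- by apply: TL => //; apply: s1.
- by apply: TR => //; apply: s2.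
- by apply: TX => //; [apply: s1 | apply: s2].
Qed.

Lemma tag_sw (w1 w2 v1 v2 : word) P1 P2 pq :
  (forall u, (is_fac w1 u && is_fac w2 u) = (is_fac v1 u && is_fac v2 u)) ->
  tag w1 w2 v1 v2 P1 P2 pq -> tag v1 v2 w1 w2 (map sw P1) (map sw P2) (sw pq).
Proof.
move=> HC; case=> /=.
- exact: TB.
- move=> u h1 h2 m1 m2.
  have : is_fac v1 u && is_fac v2 u by rewrite -HC h1 h2.
  by case/andP => ? ?; apply: TC; rewrite ?mem_sw.
- by move=> u u' h1 h2 h3 h4 m; apply: TL; rewrite ?mem_sw.
- by move=> u u' h1 h2 h3 h4 m; apply: TR; rewrite ?mem_sw.
- by move=> x y x' y' h1 h2 h3 h4 m1 m2; apply: TX; rewrite ?mem_sw.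
Qed.

Lemma sub_sw (P Q : seq (el * el)) : {subset map sw P <= Q} -> {subset P <= map sw Q}.
Proof.
move=> s [a b] h; rewrite mem_sw; apply: s; by rewrite mem_sw.
Qed.

Variables (w1 w2 v1 v2 : word) (r : nat).
Hypothesis HC : forall u, (is_fac w1 u && is_fac w2 u) = (is_fac v1 u && is_fac v2 u).
Hypothesis Hr : forall u, is_fac w1 u && is_fac w2 u -> size u <= r.

Lemma HC' u : (is_fac v1 u && is_fac v2 u) = (is_fac w1 u && is_fac w2 u).
Proof. by rewrite HC. Qed.

Lemma Hr' u : is_fac v1 u && is_fac v2 u -> size u <= r.
Proof. by rewrite -HC; apply: Hr. Qed.

Lemma main m : forall P P1 P2, W w1 v1 (m + r + 2) P1 -> W w2 v2 (m + r + 2) P2 ->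
  (forall pq, pq \in P -> tag w1 w2 v1 v2 P1 P2 pq) -> win (w1 ++ w2) (v1 ++ v2) m P.
Proof.
elim: m => [|m IH] P P1 P2 W1 W2 T.
  rewrite add0n addn2 in W1 W2.
  move=> p1 q1 p2 q2 p3 q3 h1 h2 h3; apply/idP/idP.
    exact: (FV Hr W1 W2 (T _ h1) (T _ h2) (T _ h3)).
  exact: (FV Hr' (W_sw W1) (W_sw W2) (tag_sw HC (T _ h1)) (tag_sw HC (T _ h2)) (tag_sw HC (T _ h3))).
rewrite !addSn in W1 W2.
have hn : r.+2 <= m + r + 2 by rewrite addn2 !ltnS leq_addl.
split.
  move=> x hx; case: (forth HC Hr hn W1 W2 hx) => y hy [P1' [P2' [W1' W2' s1 s2 t]]].
  exists y => //; apply: IH W1' W2' _ => pq; rewrite inE => /orP [/eqP -> // | /T t'].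
  exact: (tag_mono s1 s2 t').
move=> y hy; case: (forth HC' Hr' hn (W_sw W1) (W_sw W2) hy) => x hx [Q1 [Q2 [W1' W2' s1 s2 t]]].
exists x => //; apply: (IH _ (map sw Q1) (map sw Q2) (W_sw W1') (W_sw W2')) => pq.
rewrite inE => /orP [/eqP -> | /T t'].
  exact: (tag_sw HC' t).
exact: (tag_mono (sub_sw s1) (sub_sw s2) t').
Qed.

End Main.

Theorem lemma4p4 (Sigma : finType) (w1 w2 v1 v2 : seq Sigma) (k r : nat) :
  (forall u : seq Sigma,
     (is_fac w1 u && is_fac w2 u) = (is_fac v1 u && is_fac v2 u)) ->
  (exists2 u : seq Sigma, is_fac w1 u && is_fac w2 u & size u = r) ->
  (forall u : seq Sigma, is_fac w1 u && is_fac w2 u -> size u <= r) ->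
  1 <= k ->
  ef_equiv (k + r + 2) w1 v1 ->
  ef_equiv (k + r + 2) w2 v2 ->
  ef_equiv k (w1 ++ w2) (v1 ++ v2).
Proof.
move=> HC _ Hr _ e1 e2.
have W1 : W w1 v1 (k + r + 2) (cp w1 v1) by split; [apply: Good_cp | apply/ef_win].
have W2 : W w2 v2 (k + r + 2) (cp w2 v2) by split; [apply: Good_cp | apply/ef_win].
apply/ef_win; apply: (main HC Hr W1 W2) => pq h.
exact: (tag_init W1 W2 h).
Qed.
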